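(* Let $M\ge2$, let $\bm{\mu}_1,\dots,\bm{\mu}_M\in\mathbb{R}^d$, and let $\epsilon>0$. Let $C_k(\mathbf{x})$ denote either the GLRT cost $\|g_\epsilon(\mathbf{x}-\bm{\mu}_k)\|_2^2$ for all $k$, or the minimum-distance cost $\|\mathbf{x}-\bm{\mu}_k\|_2^2$ for all $k$. Fix a true class $i$ and a noise realization $\mathbf{n}\in\mathbb{R}^d$. For $j\ne i$, let $\mathbf{e}_{ij}=-\epsilon\,\mathrm{sign}(\bm{\mu}_i-\bm{\mu}_j)$. Then the following are equivalent: (1) there exist $\mathbf{e}$ with $\|\mathbf{e}\|_\infty\le\epsilon$ and $j\ne i$ such that $C_j(\bm{\mu}_i+\mathbf{e}+\mathbf{n})<C_i(\bm{\mu}_i+\mathbf{e}+\mathbf{n})$; (2) there exists $j\ne i$ such that $C_j(\bm{\mu}_i+\mathbf{e}_{ij}+\mathbf{n})<C_i(\bm{\mu}_i+\mathbf{e}_{ij}+\mathbf{n})$.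
   Context: For $\epsilon>0$, $g_\epsilon(x)=\mathrm{sign}(x)\max(0,|x|-\epsilon)$ with $\mathrm{sign}(0)=0$, applied coordinate-wise; $\mathrm{sign}$ of a vector is also taken coordinate-wise. *)

(* Defs.v *)
From HB Require Import structures.
From mathcomp Require Import all_boot all_order all_algebra.
Set Implicit Arguments. Unset Strict Implicit. Unset Printing Implicit Defensive.
Import Order.TTheory GRing.Theory Num.Theory.
Local Open Scope ring_scope.

Definition soft_thr (R : realFieldType) (eps x : R) : R :=
  Num.sg x * Num.max 0 (`|x| - eps).

Definition gvec (R : realFieldType) (d : nat) (eps : R) (v : 'rV[R]_d) : 'rV[R]_d :=
  \row_k soft_thr eps (v 0 k).

Definition sgvec (R : realFieldType) (d : nat) (v : 'rV[R]_d) : 'rV[R]_d :=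
  \row_k Num.sg (v 0 k).

Definition sqnorm2 (R : realFieldType) (d : nat) (v : 'rV[R]_d) : R :=
  \sum_(k < d) (v 0 k) ^+ 2.

Definition inf_norm_le (R : realFieldType) (d : nat) (v : 'rV[R]_d) (eps : R) : Prop :=
  forall k : 'I_d, `|v 0 k| <= eps.

Definition cost (R : realFieldType) (d : nat) (glrt : bool) (eps : R)
    (muk x : 'rV[R]_d) : R :=
  if glrt then sqnorm2 (gvec eps (x - muk)) else sqnorm2 (x - muk).

(* Main.v *)
Require Import Defs.
From HB Require Import structures.
From mathcomp Require Import all_boot all_order all_algebra.
From mathcomp Require Import ring lra.
Import Order.TTheory GRing.Theory Num.Theory.
Set Implicit Arguments. Unset Strict Implicit.
Local Open Scope ring_scope.


Definition q (R : realFieldType) (s : R) : R := (Num.max 0 s) ^+ 2.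

Lemma qE (R : realFieldType) (s : R) : q s = if 0 <= s then s ^+ 2 else 0.
Proof.
rewrite /q; case: leP => h //; by rewrite expr0n.
Qed.

Lemma q_inc (R : realFieldType) (a s1 s2 : R) : 0 <= a -> s1 <= s2 ->
  q (s1 + a) - q s1 <= q (s2 + a) - q s2.
Proof.
move=> ha hs; rewrite !qE.
case: (leP 0 (s1+a)) => h1; case: (leP 0 s1) => h2; case: (leP 0 (s2+a)) => h3; case: (leP 0 s2) => h4; nra.
Qed.

Lemma soft_sq (R : realFieldType) (eps t : R) : 0 < eps ->
  soft_thr eps t ^+ 2 = q (t - eps) + q (- t - eps).
Proof.
move=> he; rewrite /soft_thr !qE.
case: (ltrgtP t 0) => ht.
- rewrite ltr0_sg // ltr0_norm //.
  case: (leP 0 (t - eps)) => h1; case: (leP 0 (-t - eps)) => h2.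
  all: try (exfalso; lra); try ring.
- rewrite gtr0_sg // gtr0_norm //.
  case: (leP 0 (t - eps)) => h1; case: (leP 0 (-t - eps)) => h2.
  all: try (exfalso; lra); try ring.
- subst t; rewrite sgr0 mul0r expr0n /=.
  case: (leP 0 (0 - eps)) => h1; case: (leP 0 (-0 - eps)) => h2.
  all: try (exfalso; lra); try ring.
Qed.

Lemma q_inc' (R : realFieldType) (a s1 s2 u1 u2 : R) : 0 <= a -> s1 <= s2 ->
  u1 = s1 + a -> u2 = s2 + a -> q u1 - q s1 <= q u2 - q s2.
Proof. by move=> ha hs -> ->; apply: q_inc. Qed.

Definition F (R : realFieldType) (glrt : bool) (eps t : R) : R :=
  if glrt then soft_thr eps t ^+ 2 else t ^+ 2.

Lemma F_inc (R : realFieldType) glrt (eps a y1 y2 u1 u2 : R) : 0 < eps ->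
  0 <= a -> y1 <= y2 -> u1 = a + y1 -> u2 = a + y2 ->
  F glrt eps u1 - F glrt eps y1 <= F glrt eps u2 - F glrt eps y2.
Proof.
move=> he ha hy -> ->; rewrite /F; case: glrt; last nra.
rewrite !soft_sq //.
have H1 := @q_inc' R a (y1 - eps) (y2 - eps) (a + y1 - eps) (a + y2 - eps) ha
  ltac:(lra) ltac:(ring) ltac:(ring).
have H2 := @q_inc' R a (- (a + y2) - eps) (- (a + y1) - eps) (- y2 - eps) (- y1 - eps) ha
  ltac:(lra) ltac:(ring) ltac:(ring).
lra.
Qed.

Lemma coord (R : realFieldType) glrt (eps mi mj e nk : R) : 0 < eps -> `|e| <= eps ->
  F glrt eps (mi + - (eps * Num.sg (mi - mj)) + nk - mj)
   - F glrt eps (mi + - (eps * Num.sg (mi - mj)) + nk - mi)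
  <= F glrt eps (mi + e + nk - mj) - F glrt eps (mi + e + nk - mi).
Proof.
move=> he; rewrite ler_norml => /andP [hl hr].
have E : forall x, mi + x + nk - mj = (mi - mj) + (x + nk) by move=> x; ring.
have E' : forall x, mi + x + nk - mi = x + nk by move=> x; ring.
rewrite !E !E'; set a := mi - mj.
case: (ltrgtP a 0) => ha.
- rewrite ltr0_sg // mulrN1 opprK.
  have := @F_inc R glrt eps (- a) (a + (e + nk)) (a + (eps + nk)) (e + nk) (eps + nk)
    he ltac:(lra) ltac:(lra) ltac:(ring) ltac:(ring).
  lra.
- rewrite gtr0_sg // mulr1.
  apply: (@F_inc R glrt eps a (- eps + nk) (e + nk)) => //; lra.
- by rewrite ha !add0r !subrr.
Qed.

Lemma cost_sum (R : realFieldType) (d : nat) glrt (eps : R) (m x : 'rV[R]_d) :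
  cost glrt eps m x = \sum_(k < d) F glrt eps (x 0 k - m 0 k).
Proof.
rewrite /cost /F /sqnorm2; case: glrt; apply: eq_bigr => k _; by rewrite !mxE.
Qed.

Theorem mainTheorem9 (R : realFieldType) (M d : nat) (mu : 'I_M -> 'rV[R]_d)
    (eps : R) (glrt : bool) (i : 'I_M) (n : 'rV[R]_d) :
  (2 <= M)%N -> 0 < eps ->
  (exists (e : 'rV[R]_d) (j : 'I_M),
      inf_norm_le e eps /\ j != i /\
      cost glrt eps (mu j) (mu i + e + n) < cost glrt eps (mu i) (mu i + e + n))
  <->
  (exists j : 'I_M, j != i /\
      let eij := - (eps *: sgvec (mu i - mu j)) in
      cost glrt eps (mu j) (mu i + eij + n) < cost glrt eps (mu i) (mu i + eij + n)).
Proof.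
move=> _ he; split.
- move=> [e [j [hinf [hji H]]]]; exists j; split => //=.
  rewrite !cost_sum -subr_lt0 -sumrB in H *.
  rewrite -subr_lt0 -sumrB; apply: le_lt_trans H; apply: ler_sum => k _.
  rewrite !mxE; exact: coord.
- move=> [j [hji H]]; exists (- (eps *: sgvec (mu i - mu j))), j; split => //.
  move=> k; rewrite !mxE normrN normrM (gtr0_norm he) normr_sg.
  case: (_ != 0); rewrite /= ?mulr1 ?mulr0 //; exact: ltW.
Qed.
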